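(* Let $F$ be a field, $d\ge1$, and $x:\mathbb Z^2\to F$ such that $\det M^{(d+1)}_{j,k}=1$ and $\det M^{(d)}_{j,k}\neq0$ for all $j,k\in\mathbb Z$. Then there exist functions $c_1,\dots,c_d:\mathbb Z\to F$ such that for all $j,k\in\mathbb Z$, $$0=x_{j,k-d}+\sum_{i=1}^d(-1)^i\,c_i(j+k)\,x_{j+i,k+i-d}-(-1)^d\,x_{j+d+1,k+1}.$$ That is, the coefficients of this linear recursion depend only on $j+k$ and not on $j-k$.
   Context: For $m\ge1$, $M^{(m)}_{j,k}$ denotes the $m\times m$ matrix whose $(r,c)$ entry ($0\le r,c\le m-1$) is $x_{j-r+c,\;k-(m-1)+r+c}$. *)

(* Defs.v *)
From HB Require Import structures.
From mathcomp Require Import all_boot all_order all_algebra.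
Set Implicit Arguments. Unset Strict Implicit. Unset Printing Implicit Defensive.
Import Order.TTheory GRing.Theory Num.Theory.
Local Open Scope ring_scope.

Definition Mmat (F : fieldType) (x : int -> int -> F) (m : nat) (j k : int)
  : 'M[F]_m :=
  \matrix_(r < m, c < m)
    x (j - (r : nat)%:Z + (c : nat)%:Z)
      (k - (m.-1)%:Z + (r : nat)%:Z + (c : nat)%:Z).

(* Main.v *)
Require Import Defs.

From HB Require Import structures.
From mathcomp Require Import all_boot all_order all_algebra.
From mathcomp Require Import zify ring.
Import Order.TTheory GRing.Theory Num.Theory.
Set Implicit Arguments. Unset Strict Implicit.
Local Open Scope ring_scope.

Definition rho (F : fieldType) (x : int -> int -> F) (n : nat) (s t : int) (i : nat) : F :=
  x (t + i%:Z) (s - t + i%:Z - n%:Z).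

Definition WW (F : fieldType) (x : int -> int -> F) (n : nat) (s t : int) : 'M[F]_(n.+1, n.+2) :=
  \matrix_(r < n.+1, c < n.+2) rho x n s (t - (r : nat)%:Z) c.

Definition AA (F : fieldType) (x : int -> int -> F) (n : nat) (s t : int) (i : nat) : F :=
  (-1) ^+ i * \det (col' (inord i) (WW x n s t)).

Lemma annih (F : fieldType) (x : int -> int -> F) (n : nat) (s t : int) (r : 'I_n.+1) :
  \sum_(c < n.+2) rho x n s (t - (r : nat)%:Z) c * AA x n s t c = 0.
Proof.
pose B := \matrix_(i < n.+2, c < n.+2)
  (if unlift ord0 i is Some i' then WW x n s t i' c else WW x n s t r c).
have hB : \det B = 0.
  apply: (determinant_alternate (i1 := ord0) (i2 := lift ord0 r)).
    by rewrite neq_lift.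
  by intro c; rewrite !mxE liftK unlift_none mxE.
rewrite -[RHS]hB (expand_det_row B ord0); apply: eq_bigr => c _.
rewrite /cofactor /AA !mxE unlift_none inord_val add0n; congr (_ * (_ * _)).
congr (\det _); apply/matrixP => i k; rewrite !mxE liftK.
by rewrite mxE.
Qed.

Lemma AA0 (F : fieldType) (x : int -> int -> F) (n : nat) (s t : int) :
  AA x n s t 0 = \det (Mmat x n.+1 (t + 1) (s - t + 1)).
Proof.
rewrite /AA expr0 mul1r; congr (\det _); apply/matrixP => i k.
have -> : inord 0 = ord0 :> 'I_n.+2 by apply: val_inj; rewrite /= inordK.
rewrite !mxE lift0 /rho /=; congr x; lia.
Qed.

Lemma AAlast (F : fieldType) (x : int -> int -> F) (n : nat) (s t : int) :
  AA x n s t n.+1 = (-1) ^+ n.+1 * \det (Mmat x n.+1 t (s - t)).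
Proof.
congr (_ * _); congr (\det _); apply/matrixP => i k.
have -> : inord n.+1 = ord_max :> 'I_n.+2 by apply: val_inj; rewrite /= inordK.
rewrite !mxE lift_max /rho /=; congr x; lia.
Qed.

Lemma AAshift (F : fieldType) (x : int -> int -> F) (m : nat)
  (h1 : forall j k : int, \det (Mmat x m.+2 j k) = 1)
  (h0 : forall j k : int, \det (Mmat x m.+1 j k) != 0) (s t : int) (c : nat) :
  (c < m.+3)%N -> AA x m.+1 s t c = AA x m.+1 s (t + 1) c.
Proof.
move=> hc.
pose del := fun i : nat => AA x m.+1 s t i - AA x m.+1 s (t + 1) i.
have d0 : del 0%N = 0 by rewrite /del !AA0 !h1 subrr.
have dl : del m.+2 = 0 by rewrite /del !AAlast !h1 subrr.
have hrow : forall r : 'I_m.+1,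
    \sum_(c < m.+3) rho x m.+1 s (t - (r : nat)%:Z) c * del c = 0.
  move=> r.
  have e1 := annih x s t (widen_ord (leqnSn _) r).
  have e2 := annih x s (t + 1) (lift ord0 r).
  rewrite /= in e1; rewrite lift0 in e2.
  have ee : t + 1 - (r.+1 : nat)%:Z = t - (r : nat)%:Z by lia.
  rewrite ee in e2.
  rewrite /del; under eq_bigr do rewrite mulrBr.
  by rewrite sumrB e1 e2 subrr.
pose v : 'cV[F]_m.+1 := \col_(c < m.+1) del c.+1.
pose Mid := Mmat x m.+1 (t + 1) (s - t).
have hv : Mid *m v = 0.
  apply/matrixP => r z; rewrite !mxE.
  have := hrow r; rewrite big_ord_recl big_ord_recr /= /bump !leq0n !add1n d0 dl.
  rewrite mulr0 mulr0 add0r addr0 => H; rewrite -[RHS]H; apply: eq_bigr => c' _.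
  rewrite /Mid /v !mxE /rho /= add1n; congr (_ * _); congr x; lia.
have hu : Mid \in unitmx by rewrite unitmxE unitfE h0.
have hv0 : v = 0 by rewrite -(mulKmx hu v) hv mulmx0.
apply/eqP; rewrite -subr_eq0; apply/eqP; rewrite -/(del c).
case: c hc => [|c] hc; first exact: d0.
have [hlt|hge] := ltnP c m.+1.
  have := congr1 (fun M : 'cV[F]_m.+1 => M (Ordinal hlt) ord0) hv0.
  by rewrite !mxE.
have -> : c = m.+1 by apply/eqP; rewrite eqn_leq hge -ltnS -ltnS hc.
exact: dl.
Qed.

Lemma AAconst (F : fieldType) (x : int -> int -> F) (m : nat)
  (h1 : forall j k : int, \det (Mmat x m.+2 j k) = 1)
  (h0 : forall j k : int, \det (Mmat x m.+1 j k) != 0) (s t : int) (c : nat) :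
  (c < m.+3)%N -> AA x m.+1 s t c = AA x m.+1 s 0 c.
Proof.
move=> hc.
have hn : forall (u : int) (k : nat), AA x m.+1 s u c = AA x m.+1 s (u + k%:Z) c.
  move=> u; elim=> [|k IH]; first by rewrite addr0.
  rewrite IH (AAshift h1 h0 _ _ hc); congr AA; lia.
case: t => k; first by rewrite (hn 0 k) add0r.
rewrite (hn (Negz k) k.+1); congr AA; rewrite NegzE; lia.
Qed.

Theorem mainTheorem6 (F : fieldType) (d : nat) (hd : (1 <= d)%N)
  (x : int -> int -> F)
  (hdet1 : forall j k : int, \det (Mmat x d.+1 j k) = 1)
  (hdet0 : forall j k : int, \det (Mmat x d j k) != 0) :
  exists c : nat -> int -> F,
    forall j k : int,
      0 = x j (k - d%:Z)
          + \sum_(1 <= i < d.+1) (-1) ^+ i * c i (j + k)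
                                 * x (j + i%:Z) (k + i%:Z - d%:Z)
          - (-1) ^+ d * x (j + d%:Z + 1) (k + 1).
Proof.
case: d hd hdet1 hdet0 => [//|m] _ h1 h0.
exists (fun i s => (-1) ^+ i * AA x m.+1 s 0 i) => j k.
have H := annih x (n := m.+1) (j + k) j ord0.
rewrite big_ord_recl big_ord_recr /= in H.
set S := \sum_(i < m.+1) _ in H.
rewrite big_add1 /= big_mkord.
have -> : \sum_(i < m.+1) (-1) ^+ i.+1 * ((-1) ^+ i.+1 * AA x m.+1 (j + k) 0 i.+1)
             * x (j + (i.+1 : nat)%:Z) (k + (i.+1 : nat)%:Z - (m.+1 : nat)%:Z) = S.
  apply: eq_bigr => i _.
  rewrite /bump leq0n add1n (AAconst h1 h0 _ j); last by rewrite !ltnS ltnW.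
  rewrite mulrA -exprD addnn -mul2n exprM sqrrN expr1n expr1n mul1r mulrC /rho.
  congr (_ * _); congr x; lia.
have e1 : rho x m.+1 (j + k) (j - 0%Z) 0 = x j (k - (m.+1 : nat)%:Z).
  by rewrite /rho; congr x; lia.
have e2 : rho x m.+1 (j + k) (j - 0%Z) m.+2 = x (j + (m.+1 : nat)%:Z + 1) (k + 1).
  by rewrite /rho; congr x; lia.
rewrite /bump leq0n add1n e1 e2 AA0 AAlast !h1 in H.
rewrite -[LHS]H exprS; ring.
Qed.
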